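(* For every preference profile $\sigma_N$ of $n$ metrics over $m$ alternatives and every $\epsilon>0$, there exists a nonempty subset $K\subseteq N$ with $|K|\le \left\lceil\frac{1}{\epsilon^2}\log(2m)\right\rceil$ that satisfies $\epsilon$-positional proportionality.
   Context: Let $N=[n]$ be a set of metrics and $A=[m]$ a set of alternatives. Each metric $i\in N$ has a ranking $\sigma_i$ of $A$; $\sigma_i(a)$ is the position of $a$ (1 is best). For $K\subseteq N$, $r\in[m]$, $a\in A$, let $C(K,r,a)=|\{i\in K:\sigma_i(a)\le r\}|$. For $\epsilon\ge0$, a nonempty subset $K\subseteq N$ satisfies $\epsilon$-positional proportionality if for all $a\in A$ and $r\in[m]$, $$\left|\frac{C(N,r,a)}{|N|}-\frac{C(K,r,a)}{|K|}\right|\le\epsilon.$$ Logarithms are natural. *)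

(* Defs.v *)
From mathcomp Require Import all_boot all_order all_algebra all_fingroup.
From mathcomp Require Import all_classical all_reals.
From mathcomp Require Import exp.
Set Implicit Arguments. Unset Strict Implicit. Unset Printing Implicit Defensive.
Import Order.TTheory GRing.Theory Num.Theory.
Local Open Scope ring_scope.

(* A preference profile assigns to
   each metric i a ranking sigma i : {perm 'I_m}; (sigma i a) is the 0-based
   position of alternative a, so the paper's 1-based position is
   (sigma i a).+1. Positions r range over [m] = {1,...,m} (1-based). *)

Definition count_top (n m : nat) (sigma : 'I_n -> {perm 'I_m})
  (K : {set 'I_n}) (r : nat) (a : 'I_m) : nat :=
  #|[set i in K | ((sigma i a).+1 <= r)%N]|.

Definition positional_proportional {R : realType} (n m : nat)
  (sigma : 'I_n -> {perm 'I_m}) (eps : R) (K : {set 'I_n}) : Prop :=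
  K != finset.set0 /\
  forall (a : 'I_m) (r : nat), (1 <= r <= m)%N ->
    `| (count_top sigma [set: 'I_n] r a)%:R / n%:R
       - (count_top sigma K r a)%:R / #|K|%:R | <= eps.

(* Main.v *)
Require Import Defs.
From mathcomp Require Import all_boot all_order all_algebra all_fingroup.
From mathcomp Require Import all_classical all_reals.
From mathcomp Require Import exp.
From mathcomp Require Import sequences topology normedtype derive realfun.
From mathcomp Require Import ring lra.
Import Order.TTheory GRing.Theory Num.Theory.
Import numFieldNormedType.Exports.
Local Open Scope ring_scope.

Section H.
Local Open Scope classical_set_scope.
Variable R : realType.
Variable p : R.
Hypothesis p0 : 0 <= p.
Hypothesis p1 : p <= 1.

Let scE (a b : R) : a *: b = a * b. Proof. by []. Qed.

Let D (x : R) := 1 - p + p * expR x.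

Let D_gt0 x : 0 < D x.
Proof.
rewrite /D; have := expR_gt0 x => ex.
have [p_lt1|p_ge1] := ltP p 1.
  have : 0 <= p * expR x by rewrite mulr_ge0 // ltW.
  lra.
have -> : p = 1 by apply/le_anti; rewrite p1 p_ge1.
lra.
Qed.

Let D_neq0 x : D x != 0.
Proof. by rewrite gt_eqF // D_gt0. Qed.

Let dD (x : R) : is_derive x 1 D (p * expR x).
Proof.
rewrite /D; apply: is_derive_eq.
rewrite !(scaler0, add0r, mul1r, subr0, sub0r).
by rewrite -[p *: _]/(p * _).
Qed.

Let psi x := p + x / 4 - p * expR x * (D x)^-1.

Let dpsi (x : R) : is_derive x 1 psi (1/4 - p * expR x * (1 - p) / (D x ^+ 2)).
Proof.
have hV := is_deriveV (D_neq0 x) (dD x).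
rewrite /psi; apply: is_derive_eq.
rewrite !(scaler0, add0r, mul1r, subr0, sub0r).
rewrite [_%:A]mulr1 !scE.
have := D_neq0 x; rewrite /D => Dn0.
by field.
Qed.

Let psi_ge0 (x : R) : 0 <= x -> 0 <= psi x.
Proof.
move=> x0.
have -> : 0 = psi 0.
  rewrite /psi /D expR0 mulr1. have h : 1 - p + p = 1 by ring.
  by rewrite h invr1 mulr1 mul0r addr0 subrr.
apply: (@ger0_derive1_ndecry R psi 0) .
- by move=> y _; case: (dpsi y).
- move=> y _; rewrite derive1E; have [_ ->] := dpsi y.
  have hD := D_gt0 y.
  have -> : 1 / 4 - p * expR y * (1 - p) / D y ^+ 2 =
            (1 - p - p * expR y) ^+ 2 / (4 * D y ^+ 2).
    by rewrite /D in hD *; field; lra.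
  by rewrite divr_ge0 ?sqr_ge0 // mulr_ge0 // sqr_ge0.
- by apply: derivable_within_continuous => y _; case: (dpsi y).
all: by [].
Qed.

Let Kf (x : R) := D x * expR (- (x * p + x ^+ 2 / 8)).

Let dKf (x : R) : is_derive x 1 Kf (- (expR (- (x * p + x ^+ 2 / 8)) * D x * psi x)).
Proof.
rewrite /Kf; apply: is_derive_eq.
rewrite !(scaler0, add0r, mul1r, subr0, sub0r) ?[_%:A]mulr1 !scE.
have := D_neq0 x; rewrite /psi /D => Dn0.
move: Dn0; set E := expR (- _); set e := expR x => Dn0.
by field.
Qed.

Lemma hoeff_lemma (l : R) : 0 <= l -> D l <= expR (l * p + l ^+ 2 / 8).
Proof.
move=> l0.
have : Kf l <= Kf 0.
  apply: (@ler0_derive1_nincry R Kf 0).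
  - by move=> y _; case: (dKf y).
  - move=> y; rewrite in_itv /= andbT => y0.
    rewrite derive1E; have [_ ->] := dKf y; rewrite oppr_le0.
    by rewrite !mulr_ge0 ?psi_ge0 ?expR_ge0 ?ltW ?D_gt0.
  - by apply: derivable_within_continuous => y _; case: (dKf y).
  - by [].
  - by [].
have -> : Kf 0 = 1.
  rewrite /Kf /D expR0 mulr1 !mul0r expr0n /= mul0r addr0 oppr0 expR0 mulr1.
  ring.
rewrite /Kf expRN => h.
have he := expR_gt0 (l * p + l ^+ 2 / 8).
by rewrite -ler_pdivlMr ?invr_gt0 // invrK mul1r in h.
Qed.
End H.

Section M.
Variable R : realType.

Lemma amgm (u t : R) (j : nat) : 0 <= u -> 0 <= t ->
  (j.+1)%:R * u * t ^+ j <= u ^+ j.+1 + j%:R * t ^+ j.+1.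
Proof.
move=> u0 t0; elim: j => [|j IH].
  by rewrite !expr0 !mulr1 mul0r addr0 mul1r.
have h1 : u * ((j.+1)%:R * u * t ^+ j) <= u * (u ^+ j.+1 + j%:R * t ^+ j.+1).
  by rewrite ler_wpM2l.
have ht : 0 <= t ^+ j by rewrite exprn_ge0.
have hsq : 0 <= (j.+1)%:R * t ^+ j * (u - t) ^+ 2.
  by rewrite mulr_ge0 ?sqr_ge0 // mulr_ge0.
rewrite !exprS in h1 hsq *.
rewrite -!(natr1 j) in h1 hsq *.
nra.
Qed.

Lemma binom_step (N j : nat) (t w : R) : 0 <= t -> 0 <= w ->
  'C(N, j.+1)%:R * t ^+ j.+1 + w * ('C(N, j)%:R * t ^+ j) <=
  'C(N.+1, j.+1)%:R * ((w + N%:R * t) / N.+1%:R) ^+ j.+1.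
Proof.
move=> t0 w0.
have [jN|Nj] := leqP j N; last first.
  rewrite (bin_small (_ : N < j.+1)%N) ?(bin_small Nj) ?(bin_small (_ : N.+1 < j.+1)%N) //; last by apply: leqW.
  by rewrite !(mul0r, mulr0, addr0).
set c := 'C(N.+1, j.+1)%:R.
have hN : (N.+1%:R : R) != 0 by rewrite pnatr_eq0.
have hN' : 1 + N%:R != 0 :> R by rewrite addrC natr1.
have h1 : 'C(N, j.+1)%:R = c * (N%:R - j%:R) / N.+1%:R :> R.
  have := mul_bin_down N.+1 j.+1; rewrite /= subSS => /(congr1 (fun n => n%:R : R)).
  rewrite !natrM natrB // => e.
  by apply: (mulfI hN); rewrite e /c; field.
have h2 : 'C(N, j)%:R = c * j.+1%:R / N.+1%:R :> R.
  have := mul_bin_diag N.+1 j; rewrite /= => /(congr1 (fun n => n%:R : R)).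
  rewrite !natrM => e.
  by apply: (mulfI hN); rewrite e /c; field.
set u := (w + N%:R * t) / N.+1%:R.
have u0 : 0 <= u by rewrite /u divr_ge0 // addr_ge0 // mulr_ge0.
have hw : w = N.+1%:R * u - N%:R * t by rewrite /u; field.
have c0 : 0 <= c by [].
rewrite h1 h2 hw.
have -> : c * (N%:R - j%:R) / N.+1%:R * t ^+ j.+1 +
    (N.+1%:R * u - N%:R * t) * (c * j.+1%:R / N.+1%:R * t ^+ j) =
    c * (j.+1%:R * u * t ^+ j - j%:R * t ^+ j.+1).
  rewrite !exprS -!(natr1 N) -!(natr1 j); field.
  by rewrite natr1.
rewrite ler_wpM2l //.
have := @amgm u t j u0 t0.
lra.
Qed.


Lemma mac0 (T : finType) (y : T -> R) (A : {set T}) :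
  \sum_(K : {set T} | (K \subset A) && (#|K| == 0%N)) \prod_(i in K) y i <= 1.
Proof.
rewrite (eq_bigl (fun K : {set T} => K == finset.set0)) => [|K]; last first.
  by rewrite /= cards_eq0 andbC; case: eqP => // ->; rewrite finset.sub0set.
by rewrite big_pred1_eq big_set0.
Qed.

Lemma maclaurin (T : finType) (y : T -> R) (hy : forall i, 0 <= y i) (N : nat) :
  forall (A : {set T}) (k : nat), #|A| = N ->
  \sum_(K : {set T} | (K \subset A) && (#|K| == k)) \prod_(i in K) y i <=
  'C(N, k)%:R * ((\sum_(i in A) y i) / N%:R) ^+ k.
Proof.
elim: N => [|N IH] A k hA.
  case: k => [|k]; first by rewrite bin0 expr0 mulr1; apply: mac0.
  rewrite big_pred0 => [|K]; first by rewrite bin0n mul0r.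
  apply/negbTE/andP => [[sKA /eqP cK]].
  by have := subset_leq_card sKA; rewrite hA cK.
case: k => [|j]; first by rewrite bin0 expr0 mulr1; apply: mac0.
have [x xA] : exists x, x \in A by apply/card_gt0P; rewrite hA.
have hA' : #|A :\ x| = N by move: hA; rewrite (cardsD1 x) xA add1n => [[]].
rewrite (bigID (fun K : {set T} => x \in K)) /= addrC.
rewrite [X in X + _](eq_bigl (fun K : {set T} => (K \subset A :\ x) && (#|K| == j.+1))) => [|K]; last first.
  by rewrite subsetD1 andbAC.
rewrite [X in _ + X](reindex_onto (fun K : {set T} => x |: K) (fun K : {set T} => K :\ x)) /=; last first.
  by move=> K /andP [_ xK]; exact: finset.setD1K.
rewrite [X in _ + X](eq_bigl (fun K : {set T} => (K \subset A :\ x) && (#|K| == j))) => [|K]; last first.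
  case xK: (x \in K).
    have -> : (x |: K) :\ x == K = false.
      apply/negbTE/eqP => e; move: xK; rewrite -e.
      by rewrite !inE eqxx.
    by rewrite subsetD1 xK !andbF.
  rewrite finset.setU1K ?xK // eqxx andbT subsetD1 xK andbT.
  rewrite finset.subUset finset.sub1set xA /= cardsU1 xK add1n eqSS.
  by rewrite setU11 andbT.
rewrite [X in _ + X](eq_bigr (fun K : {set T} => y x * \prod_(i in K) y i)) => [|K /andP [sK _]]; last first.
  by rewrite big_setU1 //=; move: sK; rewrite subsetD1 => /andP [].
rewrite -big_distrr /=.
have I1 := IH (A :\ x) j.+1 hA'.
have I2 := IH (A :\ x) j hA'.
rewrite (big_setD1 x xA) /=.
set s' := \sum_(i in A :\ x) y i in I1 I2 *.
have s'0 : 0 <= s' by rewrite /s' sumr_ge0.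
have hs : N%:R * (s' / N%:R) = s'.
  case: N {IH I1 I2} hA hA' => [|N] _ hA'.
    move/eqP: hA'; rewrite cards_eq0 => /eqP hA'.
    by rewrite /s' hA' big_set0 mul0r.
  by rewrite mulrC divfK // pnatr_eq0.
apply: le_trans (_ : 'C(N, j.+1)%:R * (s' / N%:R) ^+ j.+1 +
    y x * ('C(N, j)%:R * (s' / N%:R) ^+ j) <= _).
  by rewrite lerD // ler_wpM2l.
have := @binom_step N j (s' / N%:R) (y x) (divr_ge0 s'0 (ler0n _ _)) (hy x).
by rewrite hs.
Qed.

End M.

Section Tail.
Variable R : realType.
Variable n : nat.
Hypothesis hn : (0 < n)%N.

Definition Sf (f : 'I_n -> bool) (K : {set 'I_n}) : R := \sum_(i in K) (f i : nat)%:R.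

Lemma Sf_ge0 f K : 0 <= Sf f K.
Proof. by rewrite /Sf sumr_ge0. Qed.

Lemma Sf_le f K : Sf f K <= #|K|%:R.
Proof.
rewrite /Sf -sum1_card natr_sum ler_sum // => i _.
by case: (f i).
Qed.

Lemma Sf_neg f K : Sf (fun i => ~~ f i) K = #|K|%:R - Sf f K.
Proof.
rewrite /Sf -sum1_card natr_sum -sumrB; apply: eq_bigr => i _.
by case: (f i) => /=; rewrite ?subrr ?subr0.
Qed.

Lemma tail (f : 'I_n -> bool) (k : nat) (eps : R) : 0 < eps -> (0 < k)%N ->
  \sum_(K : {set 'I_n} | #|K| == k)
     (if eps < Sf f K / k%:R - Sf f (finset.setT) / n%:R then 1 else 0)
  <= 'C(n, k)%:R * expR (- (2 * k%:R * eps ^+ 2)).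
Proof.
move=> e0 k0.
set p := Sf f (finset.setT) / n%:R.
have n0 : (0 < n%:R :> R) by rewrite ltr0n.
have kr0 : (0 < k%:R :> R) by rewrite ltr0n.
have p0 : 0 <= p by rewrite /p divr_ge0 ?Sf_ge0 // ltW.
have p1 : p <= 1.
  rewrite /p ler_pdivrMr // mul1r.
  by have := Sf_le f (finset.setT); rewrite cardsT card_ord.
set l := 4 * eps.
have l0 : 0 <= l by rewrite /l; lra.
set y := fun i : 'I_n => expR (l * (f i : nat)%:R).
have y0 : forall i, 0 <= y i by move=> i; exact: expR_ge0.
apply: (@le_trans _ _ (\sum_(K : {set 'I_n} | #|K| == k)
   (expR (- (l * k%:R * (p + eps))) * \prod_(i in K) y i))).
  apply: ler_sum => K /eqP hK.
  have -> : \prod_(i in K) y i = expR (l * Sf f K).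
    by rewrite /Sf mulr_sumr expR_sum.
  rewrite -expRD.
  case: ifP => [h|_]; last exact: expR_ge0.
  have : 0 <= - (l * k%:R * (p + eps)) + l * Sf f K.
    rewrite ltrBrDl ltr_pdivlMr // in h.
    have : k%:R * (p + eps) <= Sf f K by rewrite mulrC; lra.
    nra.
  move=> h0; have := expR_ge1Dx (- (l * k%:R * (p + eps)) + l * Sf f K); lra.
rewrite -mulr_sumr.
have M := @maclaurin R _ y y0 n [set: 'I_n] k (etrans (cardsT _) (card_ord n)).
rewrite (eq_bigl (fun K : {set 'I_n} => (K \subset [set: 'I_n]) && (#|K| == k))); last first.
  by move=> K; rewrite finset.subsetT.
have hs : (\sum_(i in [set: 'I_n]) y i) / n%:R = 1 - p + p * expR l.
  have -> : \sum_(i in [set: 'I_n]) y i = \sum_(i in [set: 'I_n]) (1 + (f i : nat)%:R * (expR l - 1)).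
    apply: eq_bigr => i _; rewrite /y; case: (f i) => /=.
      by rewrite mulr1 mul1r addrC subrK.
    by rewrite mulr0 mul0r addr0 expR0.
  rewrite big_split /= -mulr_suml sumr_const cardsT card_ord /p /Sf.
  by field; rewrite gt_eqF.
rewrite hs in M.
have H := @hoeff_lemma R p p0 p1 l l0; rewrite /= in H.
have H2 : (1 - p + p * expR l) ^+ k <= expR (l * p + l ^+ 2 / 8) ^+ k.
  have hD : 0 <= 1 - p + p * expR l by have := expR_gt0 l; nra.
  by apply: lerXn2r => //; rewrite nnegrE ?expR_ge0.
rewrite -expRM_natl in H2.
have hC : 0 <= 'C(n, k)%:R :> R by [].
rewrite mulrC (le_trans (ler_wpM2r (expR_ge0 _) M)) //.
rewrite -[X in X <= _]mulrA; apply: ler_wpM2l => //.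
apply: le_trans (ler_wpM2r (expR_ge0 _) H2) _.
rewrite -expRD ler_expR /l.
have -> : (4 * eps) ^+ 2 = 16 * eps ^+ 2 by ring.
have -> : eps ^+ 2 = eps * eps by ring.
nra.
Qed.

End Tail.

Lemma card_sum (T : finType) (K : {set T}) (P : pred T) :
  #|[set i in K | P i]| = (\sum_(i in K) (P i : nat))%N.
Proof.
rewrite -sum1_card [RHS]big_mkcond [LHS]big_mkcond /=.
apply: eq_bigr => i _; rewrite !inE.
by case: (i \in K); case: (P i).
Qed.

Lemma single_le (R : realType) (I : finType) (F : I -> R) a :
  (forall i, 0 <= F i) -> F a <= \sum_i F i.
Proof.
by move=> h; rewrite (bigD1 a) //= lerDl sumr_ge0.
Qed.

Lemma count_Sf (R : realType) n m (sigma : 'I_n -> {perm 'I_m}) K r a :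
  (count_top sigma K r a)%:R =
  Sf R _ (fun i => ((sigma i a).+1 <= r)%N) K.
Proof. by rewrite /count_top card_sum natr_sum. Qed.

Theorem theorem3 (R : realType) (n m : nat) (hn : (0 < n)%N) (hm : (0 < m)%N)
  (sigma : 'I_n -> {perm 'I_m}) (eps : R) (heps : 0 < eps) :
  exists K : {set 'I_n},
    ((#|K|%:Z : int) <= Num.ceil ((eps ^+ 2)^-1 * ln (2 * m%:R)))%R /\
    positional_proportional sigma eps K.
Proof.
set z := (eps ^+ 2)^-1 * ln (2 * m%:R).
have m1 : 1 < 2 * m%:R :> R.
  have : 1 <= m%:R :> R by rewrite ler1n.
  lra.
have lnpos : 0 < ln (2 * m%:R) :> R by exact: ln_gt0.
have e2 : 0 < eps ^+ 2 by rewrite exprn_gt0.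
have z0 : 0 < z by rewrite /z mulr_gt0 // invr_gt0.
have cz0 : (0 <= Num.ceil z)%R by rewrite ceil_ge0; lra.
have [k hk] : exists k : nat, Num.ceil z = k%:Z.
  by exists `|Num.ceil z|%N; rewrite gez0_abs.
have kz : z <= k%:R.
  by have := ceil_ge z; rewrite hk.
have k0 : (0 < k)%N.
  by have := z0; rewrite -ceil_gt0 hk ltz_nat.
rewrite hk.
have n0 : (0 < n%:R :> R) by rewrite ltr0n.
have kr0 : (0 < k%:R :> R) by rewrite ltr0n.
have [nk|kn] := leqP n k.
  exists [set: 'I_n]; split.
    by rewrite cardsT card_ord lez_nat.
  split.
    by apply/finset.set0Pn; exists (Ordinal hn); rewrite inE.
  by move=> a r _; rewrite cardsT card_ord subrr normr0 ltW.
case: (pselect (exists K : {set 'I_n}, #|K| = k /\ positional_proportional sigma eps K)).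
  by move=> [K [hK HK]]; exists K; split => //; rewrite hK.
move=> Hno; exfalso.
pose P (a r : 'I_m) := fun i : 'I_n => ((sigma i a).+1 <= r.+1)%N.
pose ind (f : 'I_n -> bool) (K : {set 'I_n}) : R :=
  if eps < Sf R _ f K / k%:R - Sf R _ f [set: 'I_n] / n%:R then 1 else 0.
pose F K := \sum_(a : 'I_m) \sum_(r : 'I_m) (ind (P a r) K + ind (fun i => ~~ P a r i) K).
have ind_ge0 f K : 0 <= ind f K by rewrite /ind; case: ifP.
have key : forall K : {set 'I_n}, #|K| = k -> 1 <= F K.
  move=> K hK.
  have nb : ~ positional_proportional sigma eps K by move=> h; apply: Hno; exists K.
  have Kn0 : K != finset.set0 by rewrite -card_gt0 hK.
  have [a /existsNP [r0 hr0]] : exists a : 'I_m, ~ forall r : nat, (1 <= r <= m)%N ->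
      `| (count_top sigma [set: 'I_n] r a)%:R / n%:R
       - (count_top sigma K r a)%:R / #|K|%:R | <= eps.
    apply/existsNP => h; apply: nb; split => //.
  have [hr hlt] : (1 <= r0 <= m)%N /\ eps < `| (count_top sigma [set: 'I_n] r0 a)%:R / n%:R
       - (count_top sigma K r0 a)%:R / #|K|%:R |.
    apply: contrapT => h; apply: hr0 => hr; rewrite leNgt; apply/negP => hl.
    by apply: h; split.
  have rlt : (r0.-1 < m)%N by case/andP: hr => h1 h2; rewrite prednK.
  pose r := Ordinal rlt.
  have er : r0 = r.+1 by rewrite /= prednK //; case/andP: hr.
  rewrite er !count_Sf hK in hlt.
  have hA := @single_le R _ (fun b => \sum_(s : 'I_m) (ind (P b s) K + ind (fun i => ~~ P b s i) K)) a
    (fun b => sumr_ge0 _ (fun s _ => addr_ge0 (ind_ge0 _ _) (ind_ge0 _ _))).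
  apply: le_trans hA; rewrite /=.
  have hB := @single_le R _ (fun s => (ind (P a s) K + ind (fun i => ~~ P a s i) K)) r
    (fun s => addr_ge0 (ind_ge0 _ _) (ind_ge0 _ _)).
  apply: le_trans hB; rewrite /=.
  move: hlt; rewrite ltr_normr => /orP [h|h].
    have -> : ind (fun i => ~~ P a r i) K = 1.
      rewrite /ind ifT //; rewrite !Sf_neg hK cardsT card_ord.
      set x := Sf R _ _ _ in h *; set y := Sf R _ _ _ in h *.
      have -> : (k%:R - y) / k%:R - (n%:R - x) / n%:R = x / n%:R - y / k%:R.
        by field; rewrite !gt_eqF.
      exact: h.
    by rewrite lerDr.
  have -> : ind (P a r) K = 1.
    by rewrite /ind ifT // -opprB.
  by rewrite lerDl.
set C : R := 'C(n, k)%:R.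
set E : R := expR (- (2 * k%:R * eps ^+ 2)).
have hC : \sum_(K : {set 'I_n} | #|K| == k) (1 : R) = C.
  rewrite /C; have := card_draws ('I_n) k; rewrite card_ord => <-.
  rewrite -sum1dep_card natr_sum.
  by apply: eq_bigr => K _.
have C0 : 0 < C by rewrite /C ltr0n bin_gt0 ltnW.
have bound : C <= (m%:R * m%:R) * (2 * C * E).
  rewrite -{1}hC.
  apply: le_trans (_ : \sum_(K : {set 'I_n} | #|K| == k) F K <= _).
    by apply: ler_sum => K /eqP; exact: key.
  have hsum : forall x : R, \sum_(a : 'I_m) x = m%:R * x.
    by move=> x; rewrite sumr_const card_ord mulr_natl.
  rewrite /F exchange_big /= -mulrA -hsum.
  apply: ler_sum => a _.
  rewrite exchange_big /= -hsum.
  apply: ler_sum => r _.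
  rewrite big_split /= mulrDl mul1r.
  rewrite mulrDl; apply: lerD; exact: (@tail R n hn _ k eps heps k0).
have E_le : E <= (2 * m%:R) ^- 2.
  rewrite /E.
  have lnE : (2 * m%:R) ^- 2 = expR (- (2%:R * ln (2 * m%:R))) :> R.
    by rewrite expRN expRM_natl lnK // posrE; lra.
  rewrite lnE ler_expR lerN2.
  have : ln (2 * m%:R) = z * eps ^+ 2 by rewrite /z mulrAC mulVf ?mul1r // gt_eqF.
  move=> ->.
  have : z * eps ^+ 2 <= k%:R * eps ^+ 2 by rewrite ler_pM2r.
  lra.
have mpos : 0 < m%:R :> R by rewrite ltr0n.
have : (m%:R * m%:R) * (2 * C * E) <= C / 2.
  have hE : (m%:R * m%:R) * 2 * E <= 1 / 2.
    have h2 : (m%:R * m%:R) * 2 * (2 * m%:R) ^- 2 = 1 / 2 :> R by field; rewrite gt_eqF.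
    rewrite -h2; apply: ler_wpM2l => //.
    by rewrite mulr_ge0 // mulr_ge0 // ltW.
  have -> : (m%:R * m%:R) * (2 * C * E) = C * ((m%:R * m%:R) * 2 * E) by ring.
  have -> : C / 2 = C * (1 / 2) by ring.
  by apply: ler_wpM2l => //; rewrite ltW.
lra.
Qed.
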